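(* Let $\mathfrak{n}\in A_+$ and $\gamma=\begin{pmatrix}a&b\\c&d\end{pmatrix}\in\mathrm{GL}_2(A)$. (1) Let $\ell=\max(\deg c,\deg d)$, and put $\epsilon=1$ if $\deg c\ge\deg d$ and $\epsilon=0$ otherwise. Then there exist $u\in K_\infty$ and $\gamma_0\in\Gamma_0(\mathfrak{n})$ such that $\gamma_0\gamma e_0=e_g$ with $g=\begin{pmatrix}\pi_\infty^{2\ell+\epsilon}&u\\0&1\end{pmatrix}\begin{pmatrix}0&1\\\pi_\infty&0\end{pmatrix}^{\epsilon}$. (2) Let $x,y\in A$ with $\gcd(x,y)=1=\gcd(\mathfrak{n},cx+dy)$, let $\delta=\max(\deg x,\deg y)$, and put $\epsilon=0$ if $\deg x>\deg y$ and $\epsilon=1$ otherwise. Then there exist $u\in K_\infty$ and $\gamma_0\in\Gamma_0(\mathfrak{n})$ such that $\gamma_0\gamma e_0=e_g$ with $g=w_\mathfrak{n}\begin{pmatrix}\pi_\infty^{\deg\mathfrak{n}+2\delta+\epsilon}&u\\0&1\end{pmatrix}\begin{pmatrix}0&1\\\pi_\infty&0\end{pmatrix}^{\epsilon}$, where $w_\mathfrak{n}=\begin{pmatrix}0&-1\\\mathfrak{n}&0\end{pmatrix}$.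
   Context: $\mathbb{F}_q$ a finite field, $A=\mathbb{F}_q[\theta]$, $A_+$ the monic polynomials, $\deg0=-\infty$; $\pi_\infty=\theta^{-1}$, $K_\infty=\mathbb{F}_q((\pi_\infty))$, $O_\infty=\mathbb{F}_q[[\pi_\infty]]$, $\mathcal{I}_\infty$ the Iwahori subgroup of matrices in $\mathrm{GL}_2(O_\infty)$ with lower-left entry in $\pi_\infty O_\infty$. The oriented edges of the Bruhat–Tits tree are the cosets $\mathrm{GL}_2(K_\infty)/K_\infty^\times\mathcal{I}_\infty$; $e_g$ denotes the edge (coset) of $g\in\mathrm{GL}_2(K_\infty)$, $\mathrm{GL}_2(K_\infty)$ acts by left multiplication, and $e_0=e_I$ for the identity matrix $I$. $\Gamma_0(\mathfrak{n})=\{\begin{pmatrix}a&b\\c&d\end{pmatrix}\in\mathrm{GL}_2(A):\mathfrak{n}\mid c\}$. *)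

(* Defs.v *)
From HB Require Import structures.
From mathcomp Require Import all_boot all_order all_algebra.
From mathcomp Require Import zify.
From Stdlib Require Import ClassicalEpsilon.
Set Implicit Arguments. Unset Strict Implicit. Unset Printing Implicit Defensive.
Import Order.TTheory GRing.Theory Num.Theory.
Local Open Scope ring_scope.

(* K_oo = F((pi)), pi = theta^-1 : formal Laurent series, represented by    *)
(* their coefficient function  n |-> coefficient of pi^n  (n : int), with    *)
(* support bounded below.  A = {poly F} in the variable theta.               *)
Section Laurent.
Variable F : fieldType.

Definition is_laurent (f : int -> F) :=
  exists N : int, forall n : int, n < N -> f n = 0.

Record Kinf := KInf { coef :> int -> F ; coefP : is_laurent coef }.

Definition lb (f : Kinf) : int :=
  proj1_sig (constructive_indefinite_description _ (coefP f)).

Lemma lbP (f : Kinf) n : n < lb f -> f n = 0.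
Proof.
rewrite /lb; case: (constructive_indefinite_description _ _) => N HN /=.
exact: HN.
Qed.

Definition kpi_fun (k : int) : int -> F := fun n => if n == k then 1 else 0.
Lemma kpi_laurent k : is_laurent (kpi_fun k).
Proof. exists k => n hn; rewrite /kpi_fun; case: eqP => // E; by rewrite E ltxx in hn. Qed.
Definition kpi (k : int) : Kinf := KInf (kpi_laurent k).

Definition kzero_fun : int -> F := fun _ => 0.
Lemma kzero_laurent : is_laurent kzero_fun.
Proof. by exists 0. Qed.
Definition kzero : Kinf := KInf kzero_laurent.

Definition kone : Kinf := kpi 0.

Definition kadd_fun (f g : Kinf) : int -> F := fun n => f n + g n.
Lemma kadd_laurent f g : is_laurent (kadd_fun f g).
Proof.
exists (Num.min (lb f) (lb g)) => n hn; rewrite /kadd_fun.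
rewrite !lbP ?addr0 //; apply: (lt_le_trans hn); by rewrite ge_min lexx ?orbT.
Qed.
Definition kadd (f g : Kinf) : Kinf := KInf (kadd_laurent f g).

Definition kopp_fun (f : Kinf) : int -> F := fun n => - f n.
Lemma kopp_laurent f : is_laurent (kopp_fun f).
Proof. exists (lb f) => n hn; by rewrite /kopp_fun lbP ?oppr0. Qed.
Definition kopp (f : Kinf) : Kinf := KInf (kopp_laurent f).

Definition kmul_fun (f g : Kinf) : int -> F := fun n =>
  let N := lb f + lb g in
  if N <= n then
    \sum_(k < (absz (n - N)).+1) f (lb f + k%:Z) * g (n - lb f - k%:Z)
  else 0.
Lemma kmul_laurent f g : is_laurent (kmul_fun f g).
Proof. exists (lb f + lb g) => n hn; by rewrite /kmul_fun leNgt hn. Qed.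
Definition kmul (f g : Kinf) : Kinf := KInf (kmul_laurent f g).

Definition knz (f : Kinf) := exists n, f n != 0.

Definition in_O (f : Kinf) := forall n : int, n < 0 -> f n = 0.
Definition in_piO (f : Kinf) := forall n : int, n <= 0 -> f n = 0.
Definition unit_O (f : Kinf) := in_O f /\ exists g, in_O g /\ kmul f g = kone.

(* A = F[theta] inside K_oo : theta^i = pi^(-i) *)
Definition poly_fun (p : {poly F}) : int -> F :=
  fun n => if n <= 0 then p`_(absz n) else 0.
Lemma poly_laurent p : is_laurent (poly_fun p).
Proof.
exists (- (size p)%:Z) => n hn; rewrite /poly_fun; case: ifP => // n0.
apply: nth_default; move: hn n0; case: n => m //=.
- move=> h _; have := lt_le_trans h (oppr_le0 (size p)%:Z); by [].
- rewrite NegzE ltrN2 ltz_nat => h _; exact: ltnW.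
Qed.
Definition kpoly (p : {poly F}) : Kinf := KInf (poly_laurent p).

End Laurent.

Record mat2 (R : Type) := Mat2 { m11 : R; m12 : R; m21 : R; m22 : R }.

Definition mulMA (R : ringType) (g h : mat2 R) : mat2 R :=
  Mat2 (m11 g * m11 h + m12 g * m21 h) (m11 g * m12 h + m12 g * m22 h)
       (m21 g * m11 h + m22 g * m21 h) (m21 g * m12 h + m22 g * m22 h).

Section Mat.
Variable F : fieldType.
Local Notation K := (Kinf F).

Definition mulMK (g h : mat2 K) : mat2 K :=
  Mat2 (kadd (kmul (m11 g) (m11 h)) (kmul (m12 g) (m21 h)))
       (kadd (kmul (m11 g) (m12 h)) (kmul (m12 g) (m22 h)))
       (kadd (kmul (m21 g) (m11 h)) (kmul (m22 g) (m21 h)))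
       (kadd (kmul (m21 g) (m12 h)) (kmul (m22 g) (m22 h))).

Definition scaleMK (z : K) (k : mat2 K) : mat2 K :=
  Mat2 (kmul z (m11 k)) (kmul z (m12 k)) (kmul z (m21 k)) (kmul z (m22 k)).

Definition detK (k : mat2 K) : K :=
  kadd (kmul (m11 k) (m22 k)) (kopp (kmul (m12 k) (m21 k))).

Definition iwahori (k : mat2 K) :=
  [/\ in_O (m11 k), in_O (m12 k), in_piO (m21 k), in_O (m22 k) & unit_O (detK k)].

(* e_h = e_g as cosets in GL_2(K_oo) / K_oo^x I_oo, i.e. h in g K_oo^x I_oo *)
Definition same_edge (h g : mat2 K) :=
  exists (z : K) (k : mat2 K), knz z /\ iwahori k /\ h = mulMK g (scaleMK z k).

Definition embM (g : mat2 {poly F}) : mat2 K :=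
  Mat2 (kpoly (m11 g)) (kpoly (m12 g)) (kpoly (m21 g)) (kpoly (m22 g)).

Definition upperK (e : int) (u : K) : mat2 K := Mat2 (kpi F e) u (kzero F) (kone F).
Definition Jpow (eps : bool) : mat2 K :=
  if eps then Mat2 (kzero F) (kone F) (kpi F 1) (kzero F)
  else Mat2 (kone F) (kzero F) (kzero F) (kone F).

End Mat.

Definition detA (F : fieldType) (g : mat2 {poly F}) : {poly F} :=
  m11 g * m22 g - m12 g * m21 g.
Definition GL2A (F : fieldType) (g : mat2 {poly F}) := detA g \is a GRing.unit.
Definition Gamma0 (F : fieldType) (n : {poly F}) (g : mat2 {poly F}) :=
  GL2A g /\ (n %| m21 g)%R.
Definition wn (F : fieldType) (n : {poly F}) : mat2 {poly F} := Mat2 0 (-1) n 0.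

(* Main.v *)
From HB Require Import structures.
Require Import Defs.
From mathcomp Require Import all_boot all_order all_algebra.
From mathcomp Require Import zify ring.
From mathcomp Require Import boolp.
From Stdlib Require Import ProofIrrelevance.
Unset Printing Implicit Defensive.
Import Order.TTheory GRing.Theory Num.Theory.
Local Open Scope ring_scope.

Section K.
Variable F : fieldType.
Local Notation K := (Kinf F).

Definition zb (L : int) (f : int -> F) := forall n : int, n < L -> f n = 0.
Definition conv (L1 L2 : int) (f g : int -> F) (n : int) : F :=
  if L1 + L2 <= n then
    \sum_(k < (absz (n - (L1 + L2))%R).+1) f (L1 + k%:Z) * g (n - L1 - k%:Z)
  else 0.

Lemma kmul_lb (f g : K) n : kmul f g n = conv (lb f) (lb g) f g n.
Proof. by []. Qed.

Lemma zbW L L' f : L' <= L -> zb L f -> zb L' f.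
Proof. move=> h z n hn; apply: z; exact: lt_le_trans hn h. Qed.

Lemma conv_sh1 L1 L2 f g n : zb L1 f -> conv (L1 - 1) L2 f g n = conv L1 L2 f g n.
Proof.
move=> z; rewrite /conv.
have [h|h] := lerP (L1 + L2) n.
  have -> : L1 - 1 + L2 <= n by lia.
  have -> : absz (n - (L1 - 1 + L2))%R = (absz (n - (L1 + L2))%R).+1 by lia.
  rewrite big_ord_recl /= (z (L1 - 1 + 0%N)); last by lia.
  rewrite mul0r add0r; apply: eq_bigr => i _.
  rewrite /bump /= add1n; congr (f _ * g _); lia.
have [e|ne] := eqVneq n (L1 + L2 - 1).
  have -> : L1 - 1 + L2 <= n by lia.
  have -> : absz (n - (L1 - 1 + L2))%R = 0%N by lia.
  by rewrite big_ord1 /= (z (L1 - 1 + 0%N)) ?mul0r //; lia.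
by have -> : L1 - 1 + L2 <= n = false by lia.
Qed.

Lemma conv_sh2 L1 L2 f g n : zb L2 g -> conv L1 (L2 - 1) f g n = conv L1 L2 f g n.
Proof.
move=> z; rewrite /conv.
have [h|h] := lerP (L1 + L2) n.
  have -> : L1 + (L2 - 1) <= n by lia.
  have -> : absz (n - (L1 + (L2 - 1)))%R = (absz (n - (L1 + L2))%R).+1 by lia.
  rewrite big_ord_recr /= (z (n - L1 - _)); last by lia.
  by rewrite mulr0 addr0.
have [e|ne] := eqVneq n (L1 + L2 - 1).
  have -> : L1 + (L2 - 1) <= n by lia.
  have -> : absz (n - (L1 + (L2 - 1)))%R = 0%N by lia.
  by rewrite big_ord1 /= (z (n - L1 - _)) ?mulr0 //; lia.
by have -> : L1 + (L2 - 1) <= n = false by lia.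
Qed.

Lemma conv_shn L1 L2 f g n (j1 j2 : nat) : zb L1 f -> zb L2 g ->
  conv (L1 - j1%:Z) (L2 - j2%:Z) f g n = conv L1 L2 f g n.
Proof.
move=> z1 z2.
have -> : conv (L1 - j1%:Z) (L2 - j2%:Z) f g n = conv L1 (L2 - j2%:Z) f g n.
  elim: j1 => [|j IH]; first by rewrite subr0.
  rewrite -IH -(@conv_sh1 (L1 - j%:Z) (L2 - j2%:Z) f g n); last by apply: (zbW _ _ _ _ z1); lia.
  by congr conv; lia.
elim: j2 => [|j IH]; first by rewrite subr0.
rewrite -IH -(@conv_sh2 L1 (L2 - j%:Z) f g n); last by apply: (zbW _ _ _ _ z2); lia.
by congr conv; lia.
Qed.

Lemma conv_any L1 L2 L1' L2' f g n : zb L1 f -> zb L2 g -> zb L1' f -> zb L2' g ->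
  conv L1 L2 f g n = conv L1' L2' f g n.
Proof.
move=> z1 z2 z1' z2'.
set M1 := Num.min L1 L1'; set M2 := Num.min L2 L2'.
have key : forall A B, M1 <= A -> M2 <= B -> zb A f -> zb B g ->
    conv A B f g n = conv M1 M2 f g n.
  move=> A B hA hB zA zB.
  rewrite -(conv_shn A B f g n (absz (A - M1)) (absz (B - M2)) zA zB); congr conv; lia.
by rewrite !key // ?ge_min ?lexx ?orbT.
Qed.

Lemma lbz (f : K) : zb (lb f) f.
Proof. move=> n; exact: lbP. Qed.

Lemma kmulE (f g : K) L1 L2 n : zb L1 f -> zb L2 g -> kmul f g n = conv L1 L2 f g n.
Proof. by move=> z1 z2; rewrite kmul_lb (conv_any _ _ _ _ _ _ n (lbz f) (lbz g) z1 z2). Qed.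


Lemma Kext (f g : K) : (forall n, f n = g n) -> f = g.
Proof.
case: f g => f fP [g gP] /= H.
have E : f = g by apply: functional_extensionality_dep.
subst; congr KInf; exact: proof_irrelevance.
Qed.

Definition Tp (L : int) (N : nat) (f : int -> F) : {poly F} := \poly_(i < N) f (L + i%:Z).

Lemma conv_poly (L1 L2 : int) (f g : int -> F) (n : int) (N : nat) : L1 + L2 <= n -> (absz (n - (L1 + L2))%R < N)%N ->
  conv L1 L2 f g n = (Tp L1 N f * Tp L2 N g)`_(absz (n - (L1 + L2))%R).
Proof.
move=> h hN; rewrite /conv h coefM; apply: eq_bigr => k _; rewrite !coef_poly.
have hk := ltn_ord k.
have -> : (k < N)%N by lia.
have -> : (absz (n - (L1 + L2))%R - k < N)%N by lia.
congr (f _ * g _); lia.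
Qed.

Lemma conv_0 (L1 L2 : int) (f g : int -> F) (n : int) : n < L1 + L2 -> conv L1 L2 f g n = 0.
Proof. by move=> h; rewrite /conv leNgt h. Qed.

Lemma zb_mul (L1 L2 : int) (f g : K) : zb L1 f -> zb L2 g -> zb (L1 + L2) (kmul f g).
Proof. by move=> z1 z2 n hn; rewrite (kmulE _ _ _ _ _ z1 z2) conv_0. Qed.

Lemma zb_add (L : int) (f g : K) : zb L f -> zb L g -> zb L (kadd f g).
Proof. by move=> z1 z2 n hn /=; rewrite /kadd_fun z1 ?z2 ?addr0. Qed.

Lemma zb_opp (L : int) (f : K) : zb L f -> zb L (kopp f).
Proof. by move=> z1 n hn /=; rewrite /kopp_fun z1 ?oppr0. Qed.

Lemma kmul_coef (L1 L2 : int) (f g : K) (n : int) (N : nat) : zb L1 f -> zb L2 g -> L1 + L2 <= n ->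
  (absz (n - (L1 + L2))%R < N)%N ->
  kmul f g n = (Tp L1 N f * Tp L2 N g)`_(absz (n - (L1 + L2))%R).
Proof. by move=> z1 z2 h hN; rewrite (kmulE _ _ _ _ _ z1 z2) (conv_poly _ _ _ _ _ _ h hN). Qed.

Lemma Tp_mul (L1 L2 : int) (f g : K) (N i : nat) : zb L1 f -> zb L2 g -> (i < N)%N ->
  (Tp (L1 + L2) N (kmul f g))`_i = (Tp L1 N f * Tp L2 N g)`_i.
Proof.
move=> z1 z2 hi; rewrite coef_poly hi (kmul_coef _ _ _ _ _ N z1 z2); try lia.
by congr (_ `_ _); lia.
Qed.

Lemma coefM_eq (A B A' B' : {poly F}) m :
  (forall j, (j <= m)%N -> A`_j = A'`_j) -> (forall j, (j <= m)%N -> B`_j = B'`_j) ->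
  (A * B)`_m = (A' * B')`_m.
Proof.
move=> hA hB; rewrite !coefM; apply: eq_bigr => k _.
have hk := ltn_ord k.
rewrite hA ?hB //; lia.
Qed.

Lemma kaddE (f g : K) n : kadd f g n = f n + g n. Proof. by []. Qed.
Lemma koppE (f : K) n : kopp f n = - f n. Proof. by []. Qed.

Lemma kaddA : associative (@kadd F).
Proof. by move=> f g h; apply: Kext => n; rewrite !kaddE addrA. Qed.
Lemma kaddC : commutative (@kadd F).
Proof. by move=> f g; apply: Kext => n; rewrite !kaddE addrC. Qed.
Lemma kadd0 : left_id (kzero F) (@kadd F).
Proof. by move=> f; apply: Kext => n; rewrite !kaddE add0r. Qed.
Lemma kaddN : left_inverse (kzero F) (@kopp F) (@kadd F).
Proof. by move=> f; apply: Kext => n; rewrite !kaddE koppE addNr. Qed.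

HB.instance Definition _ := gen_eqMixin K.
HB.instance Definition _ := gen_choiceMixin K.
HB.instance Definition _ := GRing.isZmodule.Build K kaddA kaddC kadd0 kaddN.

Definition Lmin3 (f g h : K) := Num.min (lb f) (Num.min (lb g) (lb h)).
Lemma zmin1 f g h : zb (Lmin3 f g h) f.
Proof. apply: (zbW (lb f)); [by rewrite ge_min lexx | exact: lbz]. Qed.
Lemma zmin2 f g h : zb (Lmin3 f g h) g.
Proof. apply: (zbW (lb g)); [by rewrite /Lmin3 !ge_min lexx ?orbT | exact: lbz]. Qed.
Lemma zmin3 f g h : zb (Lmin3 f g h) h.
Proof. apply: (zbW (lb h)); [by rewrite /Lmin3 !ge_min lexx ?orbT | exact: lbz]. Qed.

Lemma kmulC : commutative (@kmul F).
Proof.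
move=> f g; apply: Kext => n.
set L := Lmin3 f g g.
have zf : zb L f := zmin1 f g g. have zg : zb L g := zmin2 f g g.
have [h|h] := lerP (L + L) n.
  rewrite (kmul_coef _ _ _ _ _ (absz (n - (L + L))%R).+1 zf zg h) //.
  by rewrite (kmul_coef _ _ _ _ _ (absz (n - (L + L))%R).+1 zg zf h) // mulrC.
by rewrite (zb_mul _ _ _ _ zf zg) // (zb_mul _ _ _ _ zg zf).
Qed.

Lemma kmulA : associative (@kmul F).
Proof.
move=> f g h; apply: Kext => n.
set L := Lmin3 f g h.
have zf : zb L f := zmin1 f g h. have zg : zb L g := zmin2 f g h.
have zh : zb L h := zmin3 f g h.
have [hn|hn] := lerP (L + L + L) n.
  set N := (absz (n - (L + L + L))%R).+1.
  rewrite (kmul_coef _ _ _ _ _ N zf (zb_mul _ _ _ _ zg zh)); try lia.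
  rewrite (kmul_coef _ _ _ _ _ N (zb_mul _ _ _ _ zf zg) zh); try lia.
  rewrite addrA.
  transitivity ((Tp L N f * Tp L N g * Tp L N h)`_(absz (n - (L + L + L))%R)).
    rewrite -mulrA; apply: coefM_eq => j hj //.
    by rewrite (Tp_mul _ _ _ _ _ _ zg zh) //; lia.
  apply: coefM_eq => j hj //.
  by rewrite (Tp_mul _ _ _ _ _ _ zf zg) //; lia.
rewrite (zb_mul _ _ _ _ zf (zb_mul _ _ _ _ zg zh)); last by lia.
by rewrite (zb_mul _ _ _ _ (zb_mul _ _ _ _ zf zg) zh).
Qed.

Lemma kmulDl : left_distributive (@kmul F) (@kadd F).
Proof.
move=> f g h; apply: Kext => n.
set L := Lmin3 f g h.
have zf : zb L f := zmin1 f g h. have zg : zb L g := zmin2 f g h.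
have zh : zb L h := zmin3 f g h.
rewrite kaddE !(kmulE _ _ L L n) //; last exact: zb_add.
rewrite /conv; case: ifP => _; last by rewrite addr0.
by rewrite -big_split; apply: eq_bigr => k _; rewrite kaddE mulrDl.
Qed.

Lemma zb_kpi (k : int) : zb k (kpi F k).
Proof. move=> n hn /=; rewrite /kpi_fun; case: eqP => // e; subst; by rewrite ltxx in hn. Qed.

Lemma Tp_kpi (k : int) (N : nat) : Tp k N.+1 (kpi F k) = 1.
Proof.
apply/polyP => i; rewrite coef_poly coef1 /= /kpi_fun.
case: ifP => hi; last by case: i hi.
by case: i hi => [|i] _ /=; [rewrite addr0 eqxx | case: eqP => //; lia].
Qed.

Lemma kmul_kpi (f : K) (k n : int) : kmul f (kpi F k) n = f (n - k).
Proof.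
have zf := lbz f.
have [h|h] := lerP (lb f + k) n.
  rewrite (kmul_coef _ _ _ _ _ (absz (n - (lb f + k))%R).+1 zf (zb_kpi k) h) //.
  rewrite Tp_kpi mulr1 coef_poly ltnSn; congr (coef f _); lia.
have := zb_mul _ _ _ _ zf (zb_kpi k) n; rewrite zf; last lia. by apply; lia.
Qed.

Lemma kmul1 : left_id (kone F) (@kmul F).
Proof. by move=> f; apply: Kext => n; rewrite kmulC kmul_kpi subr0. Qed.

Lemma kone_neq0 : kone F != kzero F.
Proof.
apply/eqP => h; have := congr1 (fun f : K => coef f 0) h.
by rewrite /= /kpi_fun eqxx => /eqP; rewrite oner_eq0.
Qed.

HB.instance Definition _ := GRing.Zmodule_isComNzRing.Build K kmulA kmulC kmul1 kmulDl kone_neq0.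

Lemma kmulE' (f g : K) : kmul f g = f * g. Proof. by []. Qed.
Lemma kaddE' (f g : K) : kadd f g = f + g. Proof. by []. Qed.
Lemma koppE' (f : K) : kopp f = - f. Proof. by []. Qed.
Lemma kzeroE : kzero F = 0. Proof. by []. Qed.
Lemma koneE : kone F = 1. Proof. by []. Qed.



Lemma kpi_add (a b : int) : kpi F a * kpi F b = kpi F (a + b).
Proof.
apply: Kext => n; rewrite -kmulE' kmul_kpi /= /kpi_fun.
have -> : (n - b == a) = (n == a + b) by apply/idP/idP => /eqP h; apply/eqP; lia.
by [].
Qed.

Lemma kpiK (a : int) : kpi F a * kpi F (- a) = 1.
Proof. by rewrite kpi_add subrr. Qed.

Lemma kpolyD (p q : {poly F}) : kpoly (p + q) = kpoly p + kpoly q.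
Proof. apply: Kext => n; rewrite -kaddE' kaddE /= /poly_fun; by case: ifP; rewrite ?coefD ?addr0. Qed.

Lemma kpolyN (p : {poly F}) : kpoly (- p) = - kpoly p.
Proof. apply: Kext => n; rewrite -koppE' koppE /= /poly_fun; by case: ifP; rewrite ?coefN ?oppr0. Qed.

Lemma kpolyB (p q : {poly F}) : kpoly (p - q) = kpoly p - kpoly q.
Proof. by rewrite kpolyD kpolyN. Qed.

Lemma kpoly0 : kpoly (0 : {poly F}) = 0.
Proof. by apply: Kext => n; rewrite /= /poly_fun coef0; case: ifP. Qed.

Lemma kpoly1 : kpoly (1 : {poly F}) = 1.
Proof.
apply: Kext => n; rewrite /= /poly_fun /kpi_fun coef1.
case: ifP => h; have [e|ne] := eqVneq n 0; subst => //=.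
by have -> : (`|n|%N == 0%N) = false by lia.
Qed.

Lemma zb_kpolyC (c : F) : zb 0 (kpoly c%:P).
Proof. move=> n hn /=; rewrite /poly_fun coefC; case: ifP => // _; case: eqP => //; lia. Qed.

Lemma kpolyC_mul (c : F) (f : K) n : (kpoly c%:P * f) n = c * f n.
Proof.
rewrite mulrC -kmulE'.
have zf := lbz f.
have [h|h] := lerP (lb f + 0) n.
  rewrite (kmul_coef _ _ _ _ _ (absz (n - (lb f + 0))%R).+1 zf (zb_kpolyC c) h) //.
  have -> : Tp 0 (absz (n - (lb f + 0))%R).+1 (kpoly c%:P) = c%:P.
    apply/polyP => i; rewrite coef_poly coefC /= /poly_fun.
    case: ifP => hi; case: i hi => [|i] hi //=; rewrite ?coefC //.
  rewrite coefMC coef_poly ltnSn mulrC; congr (_ * coef f _); lia.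
have := zb_mul _ _ _ _ zf (zb_kpolyC c) n; rewrite zf; last lia.
by rewrite mulr0; apply; lia.
Qed.

Lemma kpolyCM (c : F) (p : {poly F}) : kpoly (c%:P * p) = kpoly c%:P * kpoly p.
Proof. apply: Kext => n; rewrite kpolyC_mul /= /poly_fun coefCM; by case: ifP; rewrite ?mulr0. Qed.

Lemma kpolyMX (p : {poly F}) : kpoly (p * 'X) = kpoly p * kpi F (-1).
Proof.
apply: Kext => n; rewrite -kmulE' kmul_kpi /= /poly_fun coefMX.
have [e|ne] := eqVneq (absz n) 0%N.
  by case: ifP => h; case: ifP => h' //; lia.
case: ifP => h; case: ifP => h' //; try lia.
by congr (_ `_ _); lia.
Qed.

Lemma kpolyM (p q : {poly F}) : kpoly (p * q) = kpoly p * kpoly q.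
Proof.
elim/poly_ind: p => [|p c IH]; first by rewrite mul0r kpoly0 mul0r.
have -> : (p * 'X + c%:P) * q = (p * q) * 'X + c%:P * q by rewrite mulrDl mulrAC.
rewrite !kpolyD !kpolyMX IH kpolyCM; ring.
Qed.


Definition ser_fun (R : {poly F}) (n : int) : F := if 0 <= n then R`_(absz n) else 0.
Lemma ser_laurent R : is_laurent (ser_fun R).
Proof. by exists 0 => n hn; rewrite /ser_fun leNgt hn. Qed.
Definition kser R : K := KInf (ser_laurent R).

Lemma zb_kser R : zb 0 (kser R).
Proof. by move=> n hn; rewrite /= /ser_fun leNgt hn. Qed.

Definition Rrev (P : {poly F}) : {poly F} := \poly_(i < size P) P`_(size P - i.+1).

Lemma kpoly_rev (P : {poly F}) : P != 0 ->
  kpoly P = kpi F (- ((size P).-1)%:Z) * kser (Rrev P).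
Proof.
move=> nz; have sP : (0 < size P)%N by rewrite size_poly_gt0.
apply: Kext => n; rewrite mulrC -kmulE' kmul_kpi /= /poly_fun /ser_fun coef_poly.
have [l eP] : exists l, size P = l.+1 by exists (size P).-1; lia.
rewrite eP /=.
case: ifP => h1; case: ifP => h2; try case: ifP => h3; try lia.
- by congr (_ `_ _); lia.
- by rewrite nth_default // eP; lia.
- by [].
Qed.

Section Inv.
Variable P : {poly F}.
Hypothesis nzP : P != 0.
Local Notation lc := (lead_coef P).
Definition yv : {poly F} := 1 - lc^-1 *: Rrev P.
Definition Sv (m : nat) : {poly F} := \sum_(j < m.+1) yv ^+ j.

Lemma lc_neq0 : lc != 0.
Proof. by rewrite lead_coef_eq0. Qed.

Lemma Rrev0 : (Rrev P)`_0 = lc.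
Proof.
have sP : (0 < size P)%N by rewrite size_poly_gt0.
by rewrite coef_poly sP lead_coefE subn1.
Qed.

Lemma yv0 : yv`_0 = 0.
Proof. by rewrite coefB coef1 coefZ Rrev0 mulVf ?lc_neq0 // subrr. Qed.

Lemma yv_low i j : (j < i)%N -> (yv ^+ i)`_j = 0.
Proof.
elim: i j => [|i IH] j // hj.
rewrite exprS coefM big1 // => k _.
case: (nat_of_ord k) (ltn_ord k) => [|k'] hk; first by rewrite yv0 mul0r.
by rewrite IH ?mulr0 //; lia.
Qed.

Lemma Sv_stable m d j : (j <= m)%N -> (Sv (m + d))`_j = (Sv m)`_j.
Proof.
move=> hj; elim: d => [|d IH]; first by rewrite addn0.
rewrite addnS [Sv (m + d).+1]/Sv big_ord_recr coefD -/(Sv (m + d)) IH yv_low ?addr0 //=; lia.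
Qed.

Lemma RSv m : Rrev P * Sv m = lc *: (1 - yv ^+ m.+1).
Proof.
have -> : Rrev P = lc *: (1 - yv) by rewrite /yv opprB addrC subrK scalerA mulfV ?lc_neq0 // scale1r.
rewrite -scalerAl; congr (_ *: _).
have := subrX1 yv m.+1; rewrite -/(Sv m) => e.
by rewrite -opprB mulNr -e opprB.
Qed.

Definition qfun (n : int) : F := if 0 <= n then lc^-1 * (Sv (absz n))`_(absz n) else 0.
Lemma q_laurent : is_laurent qfun.
Proof. by exists 0 => n hn; rewrite /qfun leNgt hn. Qed.
Definition kinvs : K := KInf q_laurent.

Lemma zb_kinvs : zb 0 kinvs.
Proof. by move=> n hn; rewrite /= /qfun leNgt hn. Qed.

Lemma kser_inv : kser (Rrev P) * kinvs = 1.
Proof.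
apply: Kext => n; rewrite -kmulE'.
have [h|h] := lerP (0 + 0) n; last first.
  rewrite (zb_mul _ _ _ _ (zb_kser _) zb_kinvs) //= /kpi_fun.
  by case: eqP => //; lia.
set m := absz (n - (0 + 0))%R.
rewrite (kmul_coef _ _ _ _ _ m.+1 (zb_kser _) zb_kinvs h) //.
transitivity ((Rrev P * (lc^-1 *: Sv m))`_m).
  apply: coefM_eq => i hi; rewrite coef_poly ltnS hi /= /ser_fun /qfun.
    by have -> : (0 <= 0 + i%:Z) by lia; congr (_ `_ _); lia.
  have -> : (0 <= 0 + i%:Z) by lia.
  have -> : absz (0 + i%:Z) = i by lia.
  rewrite coefZ; congr (_ * _).
  have -> : m = (i + (m - i))%N by lia.
  by rewrite Sv_stable.
rewrite -scalerAr RSv scalerA mulVf ?lc_neq0 // scale1r coefB yv_low // subr0 coef1 /= /kpi_fun.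
have [e|ne] := eqVneq n 0; first by subst; rewrite /m. by have -> : (m == 0%N) = false by rewrite /m; lia.
Qed.

Definition kinv : K := kpi F ((size P).-1)%:Z * kinvs.

Lemma kinvP : kpoly P * kinv = 1.
Proof.
rewrite (kpoly_rev P nzP) /kinv mulrACA kpi_add addNr.
by rewrite -koneE mul1r kser_inv.
Qed.

Lemma zb_kinv : zb ((size P).-1)%:Z kinv.
Proof. have := zb_mul _ _ _ _ (zb_kpi ((size P).-1)%:Z) zb_kinvs; by rewrite addr0. Qed.

End Inv.


Lemma zb_kpoly (p : {poly F}) : zb (1 - (size p)%:Z) (kpoly p).
Proof. move=> n hn /=; rewrite /poly_fun; case: ifP => // _; rewrite nth_default //. set s := size _ in hn *. lia. Qed.

Lemma zb_kpoly0 (p : {poly F}) : (size p <= 1)%N -> zb 0 (kpoly p).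
Proof. move=> h; apply: zbW (zb_kpoly p); lia. Qed.

Lemma zb_mulW (L1 L2 L : int) (f g : K) : zb L1 f -> zb L2 g -> L <= L1 + L2 -> zb L (f * g).
Proof. by move=> z1 z2 h; apply: zbW h _; apply: zb_mul. Qed.

Lemma zb0 (L : int) : zb L (0 : K).
Proof. by []. Qed.

Lemma zbN (L : int) (f : K) : zb L f -> zb L (- f).
Proof. exact: zb_opp. Qed.

Lemma inO (f : K) : zb 0 f -> in_O f.
Proof. by []. Qed.

Lemma inpiO (f : K) : zb 1 f -> in_piO f.
Proof. by move=> h n hn; apply: h; lia. Qed.

Lemma knz_kpi (k : int) : knz (kpi F k).
Proof. by exists k; rewrite /= /kpi_fun eqxx oner_neq0. Qed.

Lemma unitO_const (f : K) (p q : {poly F}) : f = kpoly p -> p * q = 1 ->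
  (size p <= 1)%N -> (size q <= 1)%N -> unit_O f.
Proof.
move=> -> e sp sq; split; first exact: inO (zb_kpoly0 _ sp).
exists (kpoly q); split; first exact: inO (zb_kpoly0 _ sq).
by rewrite kmulE' -kpolyM e kpoly1.
Qed.

Lemma unit_facts (p : {poly F}) : p \is a GRing.unit ->
  exists q, [/\ p * q = 1, (size p <= 1)%N & (size q <= 1)%N].
Proof.
move=> u; exists p^-1; split; first by rewrite mulrV.
  by move: u; rewrite poly_unitE => /andP [/eqP -> _].
by have := u; rewrite -unitrV poly_unitE => /andP [/eqP -> _].
Qed.

Definition kE := (kmulE', kaddE', koppE', kzeroE, koneE).

Lemma part1a (a b c d : {poly F}) : (a * d - b * c) \is a GRing.unit -> (size c < size d)%N ->
  exists u, same_edge (embM (Mat2 a b c d))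
     (mulMK (upperK ((2 * (size d).-1 + 0)%N)%:Z u) (Jpow F false)).
Proof.
move=> uD hcd.
have [l hl] : exists l, size d = l.+1 by exists (size d).-1; lia.
rewrite hl /=.
have d0 : d != 0 by rewrite -size_poly_gt0; lia.
have [D' [hD' s1 s2]] := unit_facts _ uD.
have hD := kinvP d d0.
have zD : zb l%:Z (kinv d) by have := zb_kinv d; rewrite hl.
set D := kinv d in hD zD *.
have ts := kpiK l.
exists (kpoly b * D), (kpi F (- l%:Z)),
  (Mat2 (kpi F (- l%:Z) * kpoly (a * d - b * c) * D) 0 (kpi F l * kpoly c) (kpi F l * kpoly d)).
split; first exact: knz_kpi.
split.
  split => /=.
  - apply: inO; apply: (zb_mulW _ _ _ _ _ (zb_mulW _ _ _ _ _ (zb_kpi (- l%:Z)) (zb_kpoly0 _ s1) (lexx _)) zD); lia.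
  - exact: inO (zb0 _).
  - apply: inpiO; apply: (zb_mulW _ _ _ _ _ (zb_kpi l) (zb_kpoly c)); lia.
  - apply: inO; apply: (zb_mulW _ _ _ _ _ (zb_kpi l) (zb_kpoly d)); lia.
  - apply: (unitO_const _ _ _ _ hD' s1 s2).
    rewrite /detK /= !kE kpolyB !kpolyM; ring: ts hD.
rewrite /embM /mulMK /scaleMK /upperK /Jpow /= !kE.
have -> : ((2 * l + 0)%N)%:Z = l%:Z + l%:Z by lia.
rewrite -kpi_add !kpolyB !kpolyM.
congr Mat2; ring: ts hD.
Qed.

Lemma part1b (a b c d : {poly F}) : (a * d - b * c) \is a GRing.unit -> c != 0 ->
  (size d <= size c)%N ->
  exists u, same_edge (embM (Mat2 a b c d))
     (mulMK (upperK ((2 * (size c).-1 + 1)%N)%:Z u) (Jpow F true)).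
Proof.
move=> uD c0 hcd.
have [l hl] : exists l, size c = l.+1 by exists (size c).-1; rewrite prednK // size_poly_gt0.
rewrite hl /=.
have [D' [hD' s1 s2]] := unit_facts _ uD.
have hC := kinvP c c0.
have zC : zb l%:Z (kinv c) by have := zb_kinv c; rewrite hl.
set C := kinv c in hC zC *.
have ts := kpiK l.
have w1 := kpiK 1.
exists (kpoly a * C), (kpi F (- l%:Z) * kpi F (- 1)),
  (Mat2 (kpi F l * kpoly c) (kpi F l * kpoly d) 0 (- (kpi F (- l%:Z) * kpoly (a * d - b * c) * C))).
split; first by rewrite kpi_add; exact: knz_kpi.
split.
  split => /=.
  - apply: inO; apply: (zb_mulW _ _ _ _ _ (zb_kpi l) (zb_kpoly c)); lia.
  - apply: inO; apply: (zb_mulW _ _ _ _ _ (zb_kpi l) (zb_kpoly d)); lia.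
  - exact: inpiO (zb0 _).
  - apply: inO; apply: zbN.
    apply: (zb_mulW _ _ _ _ _ (zb_mulW _ _ _ _ _ (zb_kpi (- l%:Z)) (zb_kpoly0 _ s1) (lexx _)) zC); lia.
  - apply: (unitO_const _ (- (a * d - b * c)) (- D')); rewrite ?mulrNN ?size_opp //.
    rewrite /detK /= !kE kpolyN kpolyB !kpolyM; ring: ts hC.
rewrite /embM /mulMK /scaleMK /upperK /Jpow /= !kE.
have -> : ((2 * l + 1)%N)%:Z = l%:Z + l%:Z + 1 by lia.
rewrite -!kpi_add !kpolyB !kpolyM.
congr Mat2; ring: ts w1 hC.
Qed.

Lemma unitO_gen (f g : K) : zb 0 f -> zb 0 g -> f * g = 1 -> unit_O f.
Proof. by move=> zf zg e; split; [exact: inO | exists g; split; [exact: inO|]]. Qed.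

Lemma kwn (n : {poly F}) : embM (wn n) = Mat2 0 (-1) (kpoly n) 0.
Proof. by rewrite /embM /wn /= kpoly0 kpolyN kpoly1. Qed.

Lemma part2a (x y r s n D D' : {poly F}) : n \is monic -> D * D' = 1 ->
  (size D <= 1)%N -> (size D' <= 1)%N -> x * r + y * s = - D -> (size y < size x)%N ->
  exists u, same_edge (embM (Mat2 (- y) x r s))
    (mulMK (embM (wn n)) (mulMK (upperK (((size n).-1 + 2 * (size x).-1 + 0)%N)%:Z u) (Jpow F false))).
Proof.
move=> mn hD s1 s2 hdet hxy.
have n0 : n != 0 by apply: monic_neq0.
have x0 : x != 0 by rewrite -size_poly_gt0; lia.
have [l hl] : exists l, size x = l.+1 by exists (size x).-1; lia.
have [v hv] : exists v, size n = v.+1 by exists (size n).-1; rewrite prednK // size_poly_gt0.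
rewrite hl hv /=.
have nx0 : n * x != 0 by rewrite mulf_neq0.
have hI := kinvP _ nx0. rewrite kpolyM in hI.
have zI : zb (v%:Z + l%:Z) (kinv (n * x)).
  by have := zb_kinv (n * x); rewrite size_mul // hl hv /=; apply: zbW; lia.
set I := kinv (n * x) in hI zI *.
have ts := kpiK l.
have mm := kpiK v.
have hDK : kpoly D = - (kpoly x * kpoly r + kpoly y * kpoly s).
  by rewrite -!kpolyM -kpolyD hdet kpolyN opprK.
have hDD : kpoly D * kpoly D' = 1 by rewrite -kpolyM hD kpoly1.
have zDk := zb_kpoly0 _ s1.
exists (- (kpoly s * I)), (kpi F (- l%:Z)),
  (Mat2 (- (kpoly D * kpi F (- v%:Z) * kpi F (- l%:Z) * I)) 0 (kpi F l * kpoly y) (- (kpi F l * kpoly x))).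
split; first exact: knz_kpi.
split.
  split => /=.
  - apply: inO; apply: zbN.
    apply: (zb_mulW _ _ _ _ _ (zb_mulW _ _ _ _ _ (zb_mulW _ _ _ _ _ zDk (zb_kpi (- v%:Z)) (lexx _)) (zb_kpi (- l%:Z)) (lexx _)) zI); lia.
  - exact: inO (zb0 _).
  - apply: inpiO; apply: (zb_mulW _ _ _ _ _ (zb_kpi l) (zb_kpoly y)); lia.
  - apply: inO; apply: zbN; apply: (zb_mulW _ _ _ _ _ (zb_kpi l) (zb_kpoly x)); lia.
  - have -> : detK (Mat2 (- (kpoly D * kpi F (- v%:Z) * kpi F (- l%:Z) * I)) 0 (kpi F l * kpoly y) (- (kpi F l * kpoly x)))
       = kpoly D * kpi F (- v%:Z) * I * kpoly x by rewrite /detK /= !kE; ring: ts.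
    apply: (unitO_gen _ (kpoly D' * kpi F v * kpoly n)).
    + apply: (zb_mulW _ _ _ _ _ (zb_mulW _ _ _ _ _ (zb_mulW _ _ _ _ _ zDk (zb_kpi (- v%:Z)) (lexx _)) zI (lexx _)) (zb_kpoly x)); lia.
    + apply: (zb_mulW _ _ _ _ _ (zb_mulW _ _ _ _ _ (zb_kpoly0 _ s2) (zb_kpi v) (lexx _)) (zb_kpoly n)); lia.
    + ring: mm hI hDD.
rewrite kwn /embM /mulMK /scaleMK /upperK /Jpow /= !kE.
have -> : ((v + 2 * l + 0)%N)%:Z = v%:Z + l%:Z + l%:Z by lia.
rewrite -!kpi_add !kpolyN.
congr Mat2; ring: ts mm hI hDK.
Qed.

Lemma part2b (x y r s n D D' : {poly F}) : n \is monic -> D * D' = 1 ->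
  (size D <= 1)%N -> (size D' <= 1)%N -> x * r + y * s = - D -> y != 0 -> (size x <= size y)%N ->
  exists u, same_edge (embM (Mat2 (- y) x r s))
    (mulMK (embM (wn n)) (mulMK (upperK (((size n).-1 + 2 * (size y).-1 + 1)%N)%:Z u) (Jpow F true))).
Proof.
move=> mn hD s1 s2 hdet y0 hxy.
have n0 : n != 0 by apply: monic_neq0.
have [l hl] : exists l, size y = l.+1 by exists (size y).-1; rewrite prednK // size_poly_gt0.
have [v hv] : exists v, size n = v.+1 by exists (size n).-1; rewrite prednK // size_poly_gt0.
rewrite hl hv /=.
have ny0 : n * y != 0 by rewrite mulf_neq0.
have hI := kinvP _ ny0. rewrite kpolyM in hI.
have zI : zb (v%:Z + l%:Z) (kinv (n * y)).
  by have := zb_kinv (n * y); rewrite size_mul // hl hv /=; apply: zbW; lia.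
set I := kinv (n * y) in hI zI *.
have ts := kpiK l.
have mm := kpiK v.
have w1 := kpiK 1.
have hDK : kpoly D = - (kpoly x * kpoly r + kpoly y * kpoly s).
  by rewrite -!kpolyM -kpolyD hdet kpolyN opprK.
have hDD : kpoly D * kpoly D' = 1 by rewrite -kpolyM hD kpoly1.
have zDk := zb_kpoly0 _ s1.
exists (kpoly r * I), (kpi F (- l%:Z) * kpi F (- 1)),
  (Mat2 (kpi F l * kpoly y) (- (kpi F l * kpoly x)) 0 (- (kpoly D * kpi F (- v%:Z) * kpi F (- l%:Z) * I))).
split; first by rewrite kpi_add; exact: knz_kpi.
split.
  split => /=.
  - apply: inO; apply: (zb_mulW _ _ _ _ _ (zb_kpi l) (zb_kpoly y)); lia.
  - apply: inO; apply: zbN; apply: (zb_mulW _ _ _ _ _ (zb_kpi l) (zb_kpoly x)); lia.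
  - exact: inpiO (zb0 _).
  - apply: inO; apply: zbN.
    apply: (zb_mulW _ _ _ _ _ (zb_mulW _ _ _ _ _ (zb_mulW _ _ _ _ _ zDk (zb_kpi (- v%:Z)) (lexx _)) (zb_kpi (- l%:Z)) (lexx _)) zI); lia.
  - have -> : detK (Mat2 (kpi F l * kpoly y) (- (kpi F l * kpoly x)) 0 (- (kpoly D * kpi F (- v%:Z) * kpi F (- l%:Z) * I)))
       = - (kpoly D * kpi F (- v%:Z) * I * kpoly y) by rewrite /detK /= !kE; ring: ts.
    apply: (unitO_gen _ (- (kpoly D' * kpi F v * kpoly n))).
    + apply: zbN.
      apply: (zb_mulW _ _ _ _ _ (zb_mulW _ _ _ _ _ (zb_mulW _ _ _ _ _ zDk (zb_kpi (- v%:Z)) (lexx _)) zI (lexx _)) (zb_kpoly y)); lia.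
    + apply: zbN.
      apply: (zb_mulW _ _ _ _ _ (zb_mulW _ _ _ _ _ (zb_kpoly0 _ s2) (zb_kpi v) (lexx _)) (zb_kpoly n)); lia.
    + ring: mm hI hDD.
rewrite kwn /embM /mulMK /scaleMK /upperK /Jpow /= !kE.
have -> : ((v + 2 * l + 1)%N)%:Z = v%:Z + l%:Z + l%:Z + 1 by lia.
rewrite -!kpi_add !kpolyN.
congr Mat2; ring: ts mm w1 hI hDK.
Qed.
End K.

Theorem lemma2p4 (F : finFieldType) (n : {poly F}) (gam : mat2 {poly F}) :
  n \is monic -> GL2A gam ->
  (* (1) *)
  (let c := m21 gam in let d := m22 gam in
   let l := (maxn (size c) (size d)).-1 in
   let eps := (size d <= size c)%N in
   exists (u : Kinf F) (g0 : mat2 {poly F}),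
     Gamma0 n g0 /\
     same_edge (embM (mulMA g0 gam))
               (mulMK (upperK ((2 * l + eps)%N)%:Z u) (Jpow F eps)))
  /\
  (* (2) *)
  (forall x y : {poly F},
     coprimep x y -> coprimep n (m21 gam * x + m22 gam * y) ->
     let delta := (maxn (size x) (size y)).-1 in
     let eps := (size x <= size y)%N in
     exists (u : Kinf F) (g0 : mat2 {poly F}),
       Gamma0 n g0 /\
       same_edge (embM (mulMA g0 gam))
                 (mulMK (embM (wn n))
                   (mulMK (upperK (((size n).-1 + 2 * delta + eps)%N)%:Z u) (Jpow F eps)))).
Proof.
move=> mn GL.
case: gam GL => a b c d GL.
rewrite /GL2A /detA /= in GL.
have [D' [hD' s1 s2]] := unit_facts F _ GL.
split.
  cbv zeta; rewrite [m21 _]/= [m22 _]/=.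
  have hI : mulMA (Mat2 1 0 0 1) (Mat2 a b c d) = Mat2 a b c d.
    by rewrite /mulMA /= !mul1r !mul0r !addr0 !add0r.
  have G0 : Gamma0 n (Mat2 1 0 0 1).
    by split; [rewrite /GL2A /detA /= mulr1 mulr0 subr0 unitr1 | rewrite /= dvdp0].
  case: (leqP (size d) (size c)) => h.
    have c0 : c != 0.
      apply/eqP => c0; move: h; rewrite c0 size_poly0 leqn0 size_poly_eq0 => /eqP d0.
      by move: GL; rewrite c0 d0 !mulr0 subrr unitr0.
    have [u hu] := part1b F a b c d GL c0 h.
    by exists u, (Mat2 1 0 0 1); rewrite hI; split; [exact: G0 | exact: hu].
  have [u hu] := part1a F a b c d GL h.
  by exists u, (Mat2 1 0 0 1); rewrite hI; split; [exact: G0 | exact: hu].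
move=> x y hxy hn; cbv zeta; rewrite [m21 _]/= [m22 _]/= in hn.
have /Bezout_eq1_coprimepP [[u2 v2] /= e2] := hxy.
have /Bezout_eq1_coprimepP [[u1 v1] /= e1] := hn.
pose al := - (D' * (d * y + c * x)).
pose be := D' * (b * y + a * x).
have hp : al * a + be * c = - y.
  transitivity (- ((a * d - b * c) * D') * y); first by rewrite /al /be; ring.
  by rewrite hD' mulN1r.
have hq : al * b + be * d = x.
  transitivity (((a * d - b * c) * D') * x); first by rewrite /al /be; ring.
  by rewrite hD' mul1r.
pose A := u2 * b - v2 * a.
pose B := u2 * d - v2 * c.
have hAB : al * A + be * B = 1.
  transitivity (u2 * (al * b + be * d) - v2 * (al * a + be * c)); first by rewrite /A /B; ring.
  by rewrite hp hq -e2; ring.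
have hcx : c * x + d * y = - ((a * d - b * c) * al).
  transitivity (((a * d - b * c) * D') * (c * x + d * y)); first by rewrite hD' mul1r.
  by rewrite /al; ring.
pose la := A - be * B * v1 * (a * d - b * c).
pose ka := - (B * u1).
have hdet0 : al * la - be * (n * ka) = 1.
  transitivity (al * A + be * B * (u1 * n + v1 * (c * x + d * y))).
    by rewrite hcx /la /ka; ring.
  by rewrite e1 mulr1 hAB.
pose r := n * ka * a + la * c.
pose s := n * ka * b + la * d.
have hmul : mulMA (Mat2 al be (n * ka) la) (Mat2 a b c d) = Mat2 (- y) x r s.
  by rewrite /mulMA /=; congr Mat2.
have hdet : x * r + y * s = - (a * d - b * c).
  transitivity (- ((al * la - be * (n * ka)) * (a * d - b * c))); last by rewrite hdet0 mul1r.
  have ey : y = - (al * a + be * c) by rewrite hp opprK.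
  rewrite ey -hq /r /s; ring.
have G0 : Gamma0 n (Mat2 al be (n * ka) la).
  by split; [rewrite /GL2A /detA /= hdet0 unitr1 | rewrite /= dvdp_mulr // dvdpp].
case: (leqP (size x) (size y)) => h.
  have y0 : y != 0.
    apply/eqP => y0; move: h; rewrite y0 size_poly0 leqn0 size_poly_eq0 => /eqP x0.
    by move: e2; rewrite x0 y0 !mulr0 addr0 => /eqP; rewrite eq_sym oner_eq0.
  have [u hu] := part2b F x y r s n _ D' mn hD' s1 s2 hdet y0 h.
  by exists u, (Mat2 al be (n * ka) la); rewrite hmul; split; [exact: G0 | exact: hu].
have [u hu] := part2a F x y r s n _ D' mn hD' s1 s2 hdet h.
by exists u, (Mat2 al be (n * ka) la); rewrite hmul; split; [exact: G0 | exact: hu].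
Qed.
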